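(* Let $q$ be a prime power and $n$ a positive integer. Let $h\in\mathbb{F}_q[x]$, $f\in\mathbb{F}_{q^n}[x]$ and $P(x)=f(\mathrm{Tr}_{q^n/q}(x))+L_h(x)$. Then $P$ is a complete permutation polynomial of $\mathbb{F}_{q^n}$ if and only if: (i) $\gcd\left(h(x)\cdot(h(x)+1), \frac{x^n-1}{x-1}\right)=1$; and (ii) $Q(x):=T_n[f](x)+h(1)\cdot x\in\mathbb{F}_q[x]$ is a complete permutation polynomial of $\mathbb{F}_q$.
   Context: For $u(x)=\sum_{i=0}^m a_i x^i\in\mathbb{F}_q[x]$, its linearized $q$-associate is $L_u(x)=\sum_{i=0}^m a_i x^{q^i}$. $\mathrm{Tr}_{q^n/q}(x)=x+x^q+\cdots+x^{q^{n-1}}$. For $f(x)=\sum_{i=0}^d a_i x^i\in\mathbb{F}_{q^n}[x]$, $T_n[f](x)=\sum_{i=0}^d\mathrm{Tr}_{q^n/q}(a_i)x^i\in\mathbb{F}_q[x]$. A polynomial $b$ over a finite field $K$ is a complete permutation polynomial of $K$ if both $b(x)$ and $b(x)+x$ induce bijections of $K$. *)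

(* Defs.v *)
From mathcomp Require Import all_boot all_algebra.
Set Implicit Arguments. Unset Strict Implicit. Unset Printing Implicit Defensive.
Import GRing.Theory.
Local Open Scope ring_scope.

Definition is_prime_power (q : nat) : Prop :=
  exists p k : nat, prime p /\ q = (p ^ k.+1)%N.

(* The subfield F_q of K, as the fixed points of x |-> x^q. When #|K| = q^n,
   this is exactly the unique subfield of K with q elements. *)
Definition subF (K : finFieldType) (q : nat) : {pred K} := [pred x | x ^+ q == x].

Definition tr (K : finFieldType) (n q : nat) (x : K) : K :=
  \sum_(i < n) x ^+ (q ^ i).

Definition linq (K : finFieldType) (q : nat) (u : {poly K}) (x : K) : K :=
  \sum_(i < size u) u`_i * x ^+ (q ^ i).

Definition Tn (K : finFieldType) (n q : nat) (f : {poly K}) : {poly K} :=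
  \poly_(i < size f) tr n q f`_i.

Definition bij_on (T : Type) (S : T -> Prop) (g : T -> T) : Prop :=
  (forall x, S x -> S (g x)) /\
  (forall x y, S x -> S y -> g x = g y -> x = y) /\
  (forall y, S y -> exists x, S x /\ g x = y).

Definition cpp_on (K : finFieldType) (S : K -> Prop) (g : K -> K) : Prop :=
  bij_on S g /\ bij_on S (fun x => g x + x).

(* Main.v *)
Require Import Defs.
From HB Require Import structures.
From mathcomp Require Import all_boot all_algebra all_field.
From mathcomp Require Import zify.
Import GRing.Theory.
Local Open Scope ring_scope.

Section S.
Variables (K : finFieldType) (p k n : nat).
Hypotheses (pp : prime p) (hn : (0 < n)%N) (hK : #|K| = ((p ^ k.+1) ^ n)%N).
Local Notation q := (p ^ k.+1)%N.
Implicit Types (x y z c : K).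

Lemma pcharK : p \in [pchar K].
Proof. by apply: (card_finPcharP (n := (k.+1 * n)%N)) => //; rewrite hK expnM. Qed.

Lemma q_gt1 : (1 < q)%N.
Proof. by rewrite -(expn0 p) ltn_exp2l ?prime_gt1. Qed.

Lemma exprDq i (x y : K) : (x + y) ^+ (q ^ i) = x ^+ (q ^ i) + y ^+ (q ^ i).
Proof.
apply: exprDn_pchar; rewrite -expnM pnatX pnatE //; by case: (k.+1 * i)%N; rewrite ?pcharK ?orbT.
Qed.

Definition frob (x : K) := x ^+ q.

Lemma frob_nmod : nmod_morphism frob.
Proof. split=> [|x y]; rewrite /frob. by rewrite expr0n expn_eq0 eqn0Ngt prime_gt0. by have := exprDq 1 x y; rewrite expn1. Qed.
Lemma frob_mon : monoid_morphism frob.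
Proof. by split=> [|x y]; rewrite /frob ?expr1n // exprMn. Qed.
HB.instance Definition _ := GRing.isNmodMorphism.Build K K frob frob_nmod.
HB.instance Definition _ := GRing.isMonoidMorphism.Build K K frob frob_mon.

Lemma frobn (x : K) : x ^+ (q ^ n) = x.
Proof. by rewrite -hK expf_card. Qed.

Lemma inFq x : (x \in @subF K q) = (x ^+ q == x).
Proof. by []. Qed.

Lemma fixpow (c : K) i : c ^+ q = c -> c ^+ (q ^ i) = c.
Proof. move=> hc; elim: i => [|i IH]; first by rewrite expr1. by rewrite expnSr exprM IH hc. Qed.

Lemma polyOver_fix (a : {poly K}) : a \is a polyOver (@subF K q) -> map_poly frob a = a.
Proof.
move/(all_nthP 0)=> H; apply/polyP=> i; rewrite coef_map.
case: (ltnP i (size a)) => hi; first by rewrite /frob; apply/eqP; exact: (H i hi).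
by rewrite nth_default // raddf0.
Qed.

Lemma linqE (u : {poly K}) N x : (size u <= N)%N ->
  linq q u x = \sum_(i < N) u`_i * x ^+ (q ^ i).
Proof.
move=> hN; rewrite /linq (big_ord_widen N (fun i => u`_i * x ^+ (q ^ i)) hN).
rewrite big_mkcond /=; apply: eq_bigr => i _; case: ifP => // /negbT; rewrite -leqNgt => hi.
by rewrite nth_default // mul0r.
Qed.

Lemma linqD (a b : {poly K}) x : linq q (a + b) x = linq q a x + linq q b x.
Proof.
pose N := maxn (size a) (size b).
rewrite (@linqE (a + b) N) ?(leq_trans (size_polyD _ _)) //.
rewrite (@linqE a N) ?leq_maxl // (@linqE b N) ?leq_maxr //.
by rewrite -big_split; apply: eq_bigr => i _; rewrite coefD mulrDl.
Qed.

Lemma linq0 x : linq q 0 x = 0.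
Proof. by rewrite /linq size_poly0 big_ord0. Qed.

Lemma linqN (a : {poly K}) x : linq q (- a) x = - linq q a x.
Proof. by apply/eqP; rewrite -subr_eq0 opprK -linqD addNr linq0. Qed.

Lemma linqB (a b : {poly K}) x : linq q (a - b) x = linq q a x - linq q b x.
Proof. by rewrite linqD linqN. Qed.

Lemma linqCM c (b : {poly K}) x : linq q (c%:P * b) x = c * linq q b x.
Proof.
rewrite mul_polyC (@linqE _ (size b)) ?size_scale_leq // /linq mulr_sumr.
by apply: eq_bigr => i _; rewrite coefZ mulrA.
Qed.

Lemma linq1 x : linq q 1 x = x.
Proof. by rewrite /linq size_poly1 big_ord1 coefC /= mul1r expn0 expr1. Qed.

Lemma linqC c x : linq q c%:P x = c * x.
Proof. by rewrite -[c%:P]mulr1 linqCM linq1. Qed.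

Lemma linqMX (a : {poly K}) x : linq q (a * 'X) x = linq q a (x ^+ q).
Proof.
have [->|a0] := eqVneq a 0; first by rewrite mul0r !linq0.
rewrite /linq size_mulX // big_ord_recl coefMX eqxx mul0r add0r.
by apply: eq_bigr => i _; rewrite coefMX lift0 /= expnS exprM.
Qed.


Lemma qi0 i : (q ^ i)%N != 0%N.
Proof. by rewrite -lt0n expn_gt0 (ltnW q_gt1). Qed.

Lemma linq_addx (a : {poly K}) x y : linq q a (x + y) = linq q a x + linq q a y.
Proof. by rewrite /linq -big_split; apply: eq_bigr => i _; rewrite exprDq mulrDr. Qed.

Lemma linq_0x (a : {poly K}) : linq q a 0 = 0.
Proof. by apply: big1 => i _; rewrite expr0n (negPf (qi0 i)) mulr0. Qed.

Lemma fix_coef (b : {poly K}) i : map_poly frob b = b -> b`_i ^+ q = b`_i.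
Proof. by move=> hb; have := congr1 (fun r : {poly K} => r`_i) hb; rewrite coef_map. Qed.

Lemma frob_linq (b : {poly K}) x : map_poly frob b = b ->
  (linq q b x) ^+ q = linq q b (x ^+ q).
Proof.
move=> hb; have -> : forall y, y ^+ q = frob y by [].
rewrite rmorph_sum; apply: eq_bigr => i _; rewrite rmorphM; congr (_ * _).
  exact: fix_coef.
by rewrite /= /frob -!exprM mulnC.
Qed.

Lemma linq_comp (a b : {poly K}) x : map_poly frob b = b ->
  linq q a (linq q b x) = linq q (a * b) x.
Proof.
move=> hb; elim/poly_ind: a x => [|a c IH] x; first by rewrite mul0r !linq0.
rewrite linqD linqMX linqC frob_linq // IH mulrDl mulrAC linqD linqMX linqCM.
by [].
Qed.


Definition Phi : {poly K} := \poly_(i < n) 1.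

Lemma PhiE : Phi = \sum_(i < n) 'X^i.
Proof. by rewrite /Phi poly_def; apply: eq_bigr => i _; rewrite scale1r. Qed.

Lemma Phi_div : ('X^n - 1) %/ ('X - 1) = Phi.
Proof.
have h1 : ('X - 1 : {poly K}) != 0 by rewrite -size_poly_eq0 -polyC1 size_XsubC.
by rewrite subrX1 mulKp // PhiE.
Qed.

Lemma size_Phi : size Phi = n.
Proof. by rewrite size_poly_eq // oner_neq0. Qed.

Lemma Phi_fix : map_poly frob Phi = Phi.
Proof.
apply/polyP=> i; rewrite coef_map coef_poly; case: ifP => _; last exact: raddf0.
exact: expr1n.
Qed.

Lemma trE x : tr n q x = linq q Phi x.
Proof. by rewrite /tr /linq size_Phi; apply: eq_bigr => i _; rewrite coef_poly ltn_ord mul1r. Qed.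

Lemma tr_frob x : tr n q (x ^+ q) = tr n q x.
Proof.
have [n' en] : exists n', n = n'.+1 := ex_intro _ n.-1 (esym (prednK hn)).
have hx := frobn x; rewrite /tr en in hx *.
rewrite big_ord_recr big_ord_recl /= -exprM -expnS hx expn0 expr1 addrC.
by congr (_ + _); apply: eq_bigr => i _; rewrite -exprM -expnS.
Qed.

Lemma tr_q x : tr n q x ^+ q = tr n q x.
Proof. by rewrite trE (@frob_linq Phi x Phi_fix) -!trE tr_frob. Qed.

Lemma tr_frobi i x : tr n q (x ^+ (q ^ i)) = tr n q x.
Proof. by elim: i => [|i IH]; [rewrite expn0 expr1 | rewrite (expnSr q i) exprM tr_frob]. Qed.

Lemma trD x y : tr n q (x + y) = tr n q x + tr n q y.
Proof. by rewrite /tr -big_split; apply: eq_bigr => i _; rewrite exprDq. Qed.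

Lemma tr0 : tr n q (0 : K) = 0.
Proof. by apply: big1 => i _; rewrite expr0n (negPf (qi0 i)). Qed.

Lemma trMc c x : c ^+ q = c -> tr n q (c * x) = c * tr n q x.
Proof. by move=> hc; rewrite /tr mulr_sumr; apply: eq_bigr => i _; rewrite exprMn (fixpow _ _ hc). Qed.

Lemma tr_sum (I : Type) (r : seq I) (F : I -> K) :
  tr n q (\sum_(i <- r) F i) = \sum_(i <- r) tr n q (F i).
Proof. elim: r => [|a r IH]; rewrite ?big_nil ?tr0 // !big_cons trD IH. by []. Qed.

Lemma tr_linq (h : {poly K}) x : map_poly frob h = h ->
  tr n q (linq q h x) = h.[1] * tr n q x.
Proof.
move=> hh; rewrite /linq tr_sum horner_coef mulr_suml.
apply: eq_bigr => i _. rewrite (trMc _ _ (fix_coef _ i hh)) tr_frobi expr1n mulr1. by [].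
Qed.

Lemma tr_horner (f : {poly K}) t : t ^+ q = t -> tr n q f.[t] = (Tn n q f).[t].
Proof.
move=> ht; rewrite horner_coef /Tn horner_poly tr_sum.
have hti i : (t ^+ i) ^+ q = t ^+ i by rewrite exprAC ht.
by apply: eq_bigr => i _; rewrite mulrC (trMc _ _ (hti i)) mulrC.
Qed.

Lemma card_linq (r : {poly K}) : r != 0 ->
  (#|[pred z | linq q r z == 0%R]| <= q ^ (size r).-1)%N.
Proof.
move=> r0; set m := (size r).-1.
pose R := \sum_(i < size r) r`_i *: 'X^(q ^ i)%N.
have coefR j : R`_j = \sum_(i < size r) r`_i * (j == q ^ i)%N%:R.
  by rewrite coef_sum; apply: eq_bigr => i _; rewrite coefZ coefXn.
have hm : (m < size r)%N by rewrite /m prednK // size_poly_gt0.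
have Rm : R`_(q ^ m)%N = lead_coef r.
  rewrite coefR (bigD1 (Ordinal hm)) //= eqxx mulr1 big1 ?addr0 //.
  move=> i /negPf hi; rewrite eqn_exp2l ?q_gt1 //.
  have -> : (m == i) = false by apply/negbTE; apply: contraFN hi => /eqP e; apply/eqP/val_inj.
  by rewrite mulr0.
have R0 : R != 0.
  by apply/eqP => R0; move: Rm; rewrite R0 coef0 => /esym/eqP; rewrite lead_coef_eq0 (negPf r0).
have sR : (size R <= (q ^ m).+1)%N.
  apply/leq_sizeP => j hj; rewrite coefR big1 // => i _.
  have : (q ^ i <= q ^ m)%N by rewrite leq_exp2l ?q_gt1 // /m -ltnS prednK ?size_poly_gt0.
  move=> hi; have -> : (j == q ^ i)%N = false by apply/negbTE; rewrite neq_ltn; apply/orP; right; apply: leq_trans hj; rewrite ltnS.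
  by rewrite mulr0.
have hR z : R.[z] = linq q r z.
  by rewrite horner_sum /linq; apply: eq_bigr => i _; rewrite hornerZ hornerXn.
have := max_poly_roots R0 _ (enum_uniq [pred z | linq q r z == 0]).
rewrite -cardE => H; rewrite -ltnS; apply: leq_trans sR; apply: H.
by apply/allP => z; rewrite mem_enum inE /= rootE hR.
Qed.

Lemma linq_nonzero (r : {poly K}) : r != 0 -> (size r <= n)%N -> exists z, linq q r z != 0.
Proof.
move=> r0 sr; case: (pickP [pred z | linq q r z != 0]) => [z hz | h0]; first by exists z.
have : (#|K| <= #|[pred z | linq q r z == 0%R]|)%N.
  by apply/subset_leq_card/subsetP => z _; rewrite inE /=; have := h0 z; rewrite /= => /negbFE.
move=> H; have := leq_trans H (card_linq _ r0); rewrite hK leq_exp2l ?q_gt1 //.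
have : (0 < size r)%N by rewrite size_poly_gt0.
move: sr hn; clear; lia.
Qed.

Lemma tr_onto t : t ^+ q = t -> exists x, tr n q x = t.
Proof.
move=> ht.
have Phi0 : Phi != 0 by rewrite -size_poly_eq0 size_Phi -lt0n.
have [x0 hx0] := linq_nonzero _ Phi0 (eq_leq size_Phi); rewrite -trE in hx0.
exists ((t / tr n q x0) * x0).
have hc : (t / tr n q x0) ^+ q = t / tr n q x0 by rewrite exprMn exprVn ht tr_q.
by rewrite trMc // divfK.
Qed.

Lemma linqXn m z : linq q 'X^m z = z ^+ (q ^ m).
Proof.
elim: m z => [|m IH] z; first by rewrite expr0 linq1 expn0 expr1.
by rewrite exprSr linqMX IH -exprM -expnS.
Qed.

Definition Xn1 : {poly K} := 'X^n - 1.

Lemma Xn1_fix : map_poly frob Xn1 = Xn1.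
Proof. by rewrite /Xn1 rmorphB /= map_polyXn rmorph1. Qed.

Lemma linq_Xn1 z : linq q Xn1 z = 0.
Proof. by rewrite /Xn1 linqB linqXn linq1 frobn subrr. Qed.

Lemma kill (a b : {poly K}) z : linq q (a * Xn1) z = 0.
Proof. by rewrite -linq_comp ?Xn1_fix // linq_Xn1 linq_0x. Qed.

Lemma ker_coprime (u : {poly K}) : map_poly frob u = u ->
  coprimep u Phi <-> (forall y, linq q Phi y = 0 -> linq q u y = 0 -> y = 0).
Proof.
move=> hu; split.
  move=> /Bezout_coprimepP [[a b] /= hab] y hPy huy.
  have /size_poly1P [c c0 hc] : size (a * u + b * Phi) == 1%N.
    by rewrite (eqp_size hab) size_poly1.
  have : c * y = 0.
    by rewrite -linqC -hc linqD -!linq_comp ?Phi_fix // hPy huy !linq_0x addr0.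
  by move/eqP; rewrite mulf_eq0 (negPf c0) => /eqP.
move=> H; apply/negPn/negP => ncop.
have Phi0 : Phi != 0 by rewrite -size_poly_eq0 size_Phi -lt0n.
pose g := gcdp u Phi.
have g0 : g != 0 by rewrite gcdp_eq0 negb_and Phi0 orbT.
have sg : (1 < size g)%N.
  move: ncop; rewrite /coprimep -/g; move: g0; rewrite -size_poly_eq0.
  by case: (size g) => [|[|]].
have hg : map_poly frob g = g by rewrite /g gcdp_map hu Phi_fix.
have XPhi : Xn1 = ('X - 1) * Phi by rewrite /Xn1 subrX1 PhiE.
have gX : g %| Xn1 by rewrite XPhi; apply: dvdp_mull; exact: dvdp_gcdr.
pose r := Xn1 %/ g.
have hr : map_poly frob r = r by rewrite /r map_divp Xn1_fix hg.
have hrg : r * g = Xn1 by rewrite /r divpK.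
have X0 : size Xn1 = n.+1 by rewrite /Xn1 size_Xn_sub_1.
have r0 : r != 0 by apply/eqP => r0; move: X0; rewrite -hrg r0 mul0r size_poly0.
have sr : (size r <= n)%N.
  move: X0; rewrite -hrg size_mul //; move: sg; clear; move: (size r) (size g) => a b; lia.
have [z hz] := linq_nonzero _ r0 sr.
have hPhi : Phi = (Phi %/ g) * g by rewrite divpK // dvdp_gcdr.
have hu' : u = (u %/ g) * g by rewrite divpK // dvdp_gcdl.
move/eqP: hz; apply; apply: H.
  by rewrite linq_comp // hPhi -mulrA (mulrC g) hrg kill.
by rewrite linq_comp // hu' -mulrA (mulrC g) hrg kill.
Qed.

Lemma trN x : tr n q (- x) = - tr n q x.
Proof. by apply/eqP; rewrite -subr_eq0 opprK -trD addNr tr0. Qed.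

Lemma agw (P Qf L : K -> K) :
  (forall x, tr n q (P x) = Qf (tr n q x)) ->
  (forall x y, tr n q y = 0 -> P (x + y) = P x + L y) ->
  bij_on (fun _ => True) P <->
  (bij_on (fun x => x \in @subF K q) Qf /\ (forall y, tr n q y = 0 -> L y = 0 -> y = 0)).
Proof.
move=> ha hb.
have inF t : (t \in @subF K q) = (t ^+ q == t) by [].
split.
- move=> [_ [Pinj Psurj]].
  have Lker : forall y, tr n q y = 0 -> L y = 0 -> y = 0.
    move=> y ty Ly; apply: (Pinj y 0) => //.
    by have := hb 0 y ty; rewrite add0r Ly addr0.
  have Qmap : forall s, s \in @subF K q -> Qf s \in @subF K q.
    move=> s; rewrite inF => /eqP hs; have [x hx] := tr_onto s hs.
    by rewrite -hx -ha inF tr_q.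
  have Qsurj : forall t, t \in @subF K q -> exists s, s \in @subF K q /\ Qf s = t.
    move=> t; rewrite inF => /eqP ht; have [z hz] := tr_onto t ht.
    have [x [_ hx]] := Psurj z I.
    exists (tr n q x); split; first by rewrite inF tr_q.
    by rewrite -ha hx hz.
  pose A := [set x | x \in @subF K q].
  have hA : Qf @: A = A.
    apply/eqP; rewrite eqEsubset; apply/andP; split.
      by apply/subsetP => _ /imsetP [s hs ->]; rewrite !inE in hs *; apply: Qmap.
    apply/subsetP => t; rewrite inE => ht; have [s [hs <-]] := Qsurj t ht.
    by apply: imset_f; rewrite inE.
  have Qinj : {in A &, injective Qf} by apply/imset_injP; rewrite hA.
  split => //; split; first by move=> x hx; apply: Qmap.
  split => //; move=> x1 x2 h1 h2; apply: Qinj; rewrite inE //.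
- move=> [[Qmap [Qinj Qsurj]] Lker].
  have Pinj : injective P.
    move=> x1 x2 e.
    have tx : tr n q x1 = tr n q x2.
      by apply: Qinj; rewrite ?inF ?tr_q // -!ha e.
    have ty : tr n q (x2 - x1) = 0 by rewrite trD trN tx subrr.
    have := hb x1 (x2 - x1) ty; rewrite addrC subrK -e => h.
    have hL : L (x2 - x1) = 0 by apply: (addrI (P x1)); rewrite -h addr0.
    by apply/esym/subr0_eq; apply: Lker.
  split => //; split; first by move=> x1 x2 _ _; apply: Pinj.
  move=> y _; have [g Pg gP] := injF_bij Pinj; exists (g y); split => //.
Qed.

Lemma ker_tr (u : {poly K}) : map_poly frob u = u ->
  coprimep u Phi <-> (forall y, tr n q y = 0 -> linq q u y = 0 -> y = 0).
Proof.
move=> hu; rewrite ker_coprime //; split => H y; [rewrite trE | rewrite -trE]; exact: H.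
Qed.

Theorem main (h f : {poly K}) (hh : map_poly frob h = h) :
  cpp_on (fun _ => True) (fun x => f.[tr n q x] + linq q h x) <->
  (coprimep (h * (h + 1)) (('X^n - 1) %/ ('X - 1)) /\
   cpp_on (fun x => x \in (@subF K q)) (fun x => (Tn n q f + h.[1] *: 'X).[x])).
Proof.
rewrite Phi_div coprimepMl.
set Qp := Tn n q f + h.[1] *: 'X.
have ha x : tr n q (f.[tr n q x] + linq q h x) = Qp.[tr n q x].
  by rewrite trD tr_horner ?tr_q // tr_linq // /Qp hornerD hornerZ hornerX.
have hb x y : tr n q y = 0 -> f.[tr n q (x + y)] + linq q h (x + y) =
   (f.[tr n q x] + linq q h x) + linq q h y.
  by move=> ty; rewrite trD ty addr0 linq_addx addrA.
have h1 : map_poly frob (h + 1) = h + 1.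
  by rewrite rmorphD rmorph1; congr (_ + _); exact: hh.
have ha' x : tr n q (f.[tr n q x] + linq q h x + x) = Qp.[tr n q x] + tr n q x.
  by rewrite trD ha.
have hb' x y : tr n q y = 0 -> f.[tr n q (x + y)] + linq q h (x + y) + (x + y) =
   (f.[tr n q x] + linq q h x + x) + linq q (h + 1) y.
  move=> ty; rewrite hb // linqD linq1.
  by rewrite -!addrA; congr (_ + _); rewrite !addrA; congr (_ + _); rewrite addrC !addrA; congr (_ + _); rewrite addrC.
have E1 := agw _ _ _ ha hb.
have E2 := agw (fun x => f.[tr n q x] + linq q h x + x) (fun t => Qp.[t] + t) _ ha' hb'.
have C1 := ker_tr h hh.
have C2 := ker_tr (h + 1) h1.
rewrite /cpp_on; split.
  move=> [/E1 [B1 K1] /E2 [B2 K2]].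
  by split; [apply/andP; split; [apply/C1 | apply/C2] | split].
move=> [/andP [c1 c2] [B1 B2]]; split; [apply/E1 | apply/E2]; split => //.
  exact/C1.
exact/C2.
Qed.
End S.

Theorem corollary3p4 (K : finFieldType) (q n : nat)
  (hq : is_prime_power q) (hn : (0 < n)%N) (hK : #|K| = (q ^ n)%N)
  (h f : {poly K}) (hh : h \is a polyOver ((@subF K q))) :
  cpp_on (fun _ => True) (fun x => f.[tr n q x] + linq q h x) <->
  (coprimep (h * (h + 1)) (('X^n - 1) %/ ('X - 1)) /\
   cpp_on (fun x => x \in (@subF K q)) (fun x => (Tn n q f + h.[1] *: 'X).[x])).
Proof.
move: hq; rewrite /is_prime_power => -[p [k [pp heq]]]; subst q.
apply: (main K p k n pp hn hK).
exact: (polyOver_fix K p k n pp hK h hh).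
Qed.
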